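(* For every finite nonempty set $V$ of nails and every $k$ with $1 \le k \le |V|$, every word $H_k(V)$ produced by the following recursive construction solves the specification $\kappa_k(V)$ defined by $\kappa_k(V)(S) = \mathsf{fall} \iff |S| \ge k$ (i.e.\ $H_k(V)|_S = 0 \iff |S| \ge k$ for all $S \subseteq V$). Construction: if $|V| = 1$ (so $k=1$), $H_1(V)$ is the single generator. If $|V| \ge 2$, choose any split $V = L \sqcup R$ with $n_1 = |L| \ge 1$, $n_2 = |R| \ge 1$; for each feasible $j$, i.e.\ $\max(0, k-n_2) \le j \le \min(k, n_1)$, form \[ D_j = \begin{cases} H_k(R), & j = 0,\\ H_j(L) + H_{k-j}(R), & 0 < j < k,\\ H_k(L), & j = k,\end{cases} \] where the words $H_\cdot(L)$, $H_\cdot(R)$ are produced recursively by the same construction; then let $H_k(V)$ be the value of any commutator tree whose leaves are the words $D_j$, each feasible $j$ used exactly once (for instance the tree obtained by Huffman placement, repeatedly combining the two currently shortest subexpressions into a commutator).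
   Context: Words are elements of the free group $F(V)$ on a finite set $V$ of nails, written additively ($+$ group operation, $-$ inverse, $0$ identity); the commutator is $[a,b] = a + b - a - b$. A commutator tree is a finite rooted binary tree with leaves labelled by words, whose value is computed by taking the commutator of the values of the two children at each internal node. For $S \subseteq V$, $h|_S$ is the image of $h$ under the homomorphism killing the generators in $S$. A word $h$ solves a specification $f: 2^V \to \{\mathsf{hang},\mathsf{fall}\}$ if $h|_S = 0 \iff f(S)=\mathsf{fall}$ for all $S\subseteq V$. Solving $\kappa_k(V)$ with $V=\{1,\dots,n\}$ is the same as solving the $k$-out-of-$n$ picture-hanging puzzle: the word is nonzero, removing any $k$ nails makes it $0$, removing fewer leaves it nonzero. *)

(* Defs.v *)
(* Free group F(T) on the nails of a finite type T,
   represented by freely reduced words (canonical normal forms). *)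
From mathcomp Require Import all_boot.
Set Implicit Arguments. Unset Strict Implicit. Unset Printing Implicit Defensive.

Section FreeGroup.
Variable T : finType.

(* a letter: a generator x with sign (true = x, false = -x) *)
Definition letter := (T * bool)%type.

Definition cancels (a b : letter) : bool := (a.1 == b.1) && (a.2 != b.2).

Definition push (a : letter) (acc : seq letter) : seq letter :=
  match acc with
  | b :: t => if cancels a b then t else a :: acc
  | [::] => [:: a]
  end.
Definition reduce (s : seq letter) : seq letter := foldr push [::] s.

Definition fg_zero : seq letter := [::].
Definition fg_gen (x : T) : seq letter := [:: (x, true)].
Definition fg_add (a b : seq letter) : seq letter := reduce (a ++ b).
Definition fg_opp (a : seq letter) : seq letter :=
  reduce (rev [seq (l.1, ~~ l.2) | l <- a]).
Definition fg_comm (a b : seq letter) : seq letter :=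
  fg_add (fg_add (fg_add a b) (fg_opp a)) (fg_opp b).

(* h|_S : image under the homomorphism killing the generators in S *)
Definition restrict (S : {set T}) (h : seq letter) : seq letter :=
  reduce [seq l <- h | l.1 \notin S].

Inductive ctree := Leaf of seq letter | Node of ctree & ctree.

Fixpoint cvalue (t : ctree) : seq letter :=
  match t with
  | Leaf w => w
  | Node l r => fg_comm (cvalue l) (cvalue r)
  end.

Fixpoint cleaves (t : ctree) : seq (seq letter) :=
  match t with
  | Leaf w => [:: w]
  | Node l r => cleaves l ++ cleaves r
  end.

(* D_j built from chosen words hL j = H_j(L), hR i = H_i(R) *)
Definition Dj (k : nat) (hL hR : nat -> seq letter) (j : nat) : seq letter :=
  if j == 0 then hR k
  else if j == k then hL k
  else fg_add (hL j) (hR (k - j)).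

Inductive Hword : {set T} -> nat -> seq letter -> Prop :=
| Hword_single (x : T) : Hword [set x] 1 (fg_gen x)
| Hword_split (V L R : {set T}) (k : nat) (hL hR : nat -> seq letter) (t : ctree) :
    2 <= #|V| ->
    1 <= k <= #|V| ->
    [disjoint L & R] -> L :|: R = V -> 1 <= #|L| -> 1 <= #|R| ->
    (forall j, k - #|R| <= j <= minn k #|L| -> 0 < j -> Hword L j (hL j)) ->
    (forall j, k - #|R| <= j <= minn k #|L| -> j < k -> Hword R (k - j) (hR (k - j))) ->
    perm_eq (cleaves t)
      [seq Dj k hL hR j | j <- iota (k - #|R|) ((minn k #|L|).+1 - (k - #|R|))] ->
    Hword V k (cvalue t).

End FreeGroup.

(* Main.v *)
Require Import Defs.
From mathcomp Require Import all_boot zify.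
Set Implicit Arguments. Unset Strict Implicit. Unset Printing Implicit Defensive.
Section FG.
Variable T : finType.
Implicit Types (s a b c u w X Y : seq (letter T)) (x y : letter T).

Definition ncan x y := ~~ cancels x y.
Definition redd s := sorted (@ncan) s.
Definition flip (x : letter T) : letter T := (x.1, ~~ x.2).
Definition winv s := rev (map flip s).

Lemma cancelsC x y : cancels x y = cancels y x.
Proof. by rewrite /cancels (eq_sym x.1); case: (x.2); case: (y.2). Qed.

Lemma cancels_flip x y : cancels x y -> y = flip x.
Proof.
case: x y => [x1 x2] [y1 y2]; rewrite /cancels /flip /= => /andP [/eqP -> ].
by case: x2; case: y2.
Qed.

Lemma cancels_flipx x : cancels x (flip x).
Proof. by case: x => x1 x2; rewrite /cancels /= eqxx; case: x2. Qed.

Lemma flipK : involutive flip.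
Proof. by case=> x1 x2; rewrite /flip /= negbK. Qed.

Lemma winvK : involutive winv.
Proof. by move=> s; rewrite /winv map_rev revK -map_comp (eq_map flipK) map_id. Qed.

Lemma winv_cat a b : winv (a ++ b) = winv b ++ winv a.
Proof. by rewrite /winv map_cat rev_cat. Qed.

Lemma winv_cons x s : winv (x :: s) = winv s ++ [:: flip x].
Proof. by rewrite -cat1s winv_cat. Qed.

Lemma size_winv s : size (winv s) = size s.
Proof. by rewrite /winv size_rev size_map. Qed.

Lemma reduce_cons x s : reduce (x :: s) = push x (reduce s).
Proof. by []. Qed.

Lemma reduce_cat a b : reduce (a ++ b) = foldr (@push T) (reduce b) a.
Proof. by rewrite /reduce foldr_cat. Qed.

Lemma push_redd x r : redd r -> redd (push x r).
Proof.
case: r => [|y r] //= Hr.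
case: ifP => H; first exact: path_sorted Hr.
by rewrite /redd /= /ncan H.
Qed.

Lemma redd_reduce s : redd (reduce s).
Proof. by elim: s => [|x s IH] //=; apply: push_redd. Qed.

Lemma reduce_id r : redd r -> reduce r = r.
Proof.
elim: r => [|x r IH] //= Hr.
rewrite IH; last exact: path_sorted Hr.
case: r Hr {IH} => [|y r] //= /andP [H _].
by move: H; rewrite /ncan => /negbTE ->.
Qed.

Lemma reduceK s : reduce (reduce s) = reduce s.
Proof. exact/reduce_id/redd_reduce. Qed.

Lemma reduce_cancel2 x y t : cancels x y -> reduce (x :: y :: t) = reduce t.
Proof.
move=> Hxy; rewrite !reduce_cons.
have := redd_reduce t.
case: (reduce t) => [|b r] /=; first by rewrite Hxy.
move=> Hr.
case: ifP => Hyb.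
- have Exb : x = b by rewrite (cancels_flip Hyb) (cancels_flip Hxy) flipK.
  subst b; case: r Hr => [|c r] //= /andP [Hc _].
  by move: Hc; rewrite /ncan => /negbTE ->.
- by rewrite /= Hxy.
Qed.

Lemma reduce_catr a b : reduce (a ++ reduce b) = reduce (a ++ b).
Proof. by rewrite !reduce_cat reduceK. Qed.

Lemma push_cat x r b : redd r -> reduce (push x r ++ b) = reduce (x :: r ++ b).
Proof.
case: r => [|y r] //= Hr.
case: ifP => H //.
by rewrite -!reduce_cons reduce_cancel2.
Qed.

Lemma reduce_catl a b : reduce (reduce a ++ b) = reduce (a ++ b).
Proof.
elim: a => [|x a IH]; first by [].
by rewrite /= push_cat ?redd_reduce // reduce_cons IH.
Qed.

Lemma eqv_cat a a' b b' : reduce a = reduce a' -> reduce b = reduce b' ->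
  reduce (a ++ b) = reduce (a' ++ b').
Proof. by move=> Ha Hb; rewrite -reduce_catl -reduce_catr Ha Hb reduce_catr reduce_catl. Qed.

Lemma reduce_winv s : reduce (winv (reduce s)) = reduce (winv s).
Proof.
elim: s => [|x s IH] //=.
have Hr := redd_reduce s.
have -> : reduce (winv (push x (reduce s))) = reduce (winv (x :: reduce s)).
  case: (reduce s) Hr => [|y r] //= Hr.
  case: ifP => H //.
  rewrite !winv_cons -catA /= -reduce_catr.
  rewrite (@reduce_cancel2 (flip y) (flip x) [::]) ?reduce_catr ?cats0 //.
  by move: H; rewrite /cancels /flip /= => /andP [/eqP -> ]; rewrite eqxx; case: (x.2); case: (y.2).
by rewrite !winv_cons -reduce_catl IH reduce_catl.
Qed.

Lemma eqv_winv a a' : reduce a = reduce a' -> reduce (winv a) = reduce (winv a').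
Proof. by move=> H; rewrite -reduce_winv H reduce_winv. Qed.

Lemma reduce_winvr a : reduce (a ++ winv a) = [::].
Proof.
elim: a => [|x a IH] //.
rewrite winv_cons /= catA -reduce_catl IH /=.
by rewrite cancels_flipx.
Qed.

Lemma reduce_winvl a : reduce (winv a ++ a) = [::].
Proof. by rewrite -{2}(winvK a) reduce_winvr. Qed.


Lemma reduce_cancel_mid a c x y : cancels x y -> reduce (a ++ x :: y :: c) = reduce (a ++ c).
Proof. by move=> H; rewrite -reduce_catr reduce_cancel2 // reduce_catr. Qed.

Lemma catIl (A B C : seq (letter T)) : A ++ B = A ++ C -> B = C.
Proof. by move/(congr1 (drop (size A))); rewrite !drop_size_cat. Qed.

Definition fil (p : pred T) s := [seq l <- s | p l.1].
Definition rho (p : pred T) s := reduce (fil p s).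

Lemma fil_cat p a b : fil p (a ++ b) = fil p a ++ fil p b.
Proof. exact: filter_cat. Qed.

Lemma fil_winv p a : fil p (winv a) = winv (fil p a).
Proof. by rewrite /fil /winv filter_rev filter_map. Qed.

Lemma reduce_fil p s : reduce (fil p (reduce s)) = reduce (fil p s).
Proof.
elim: s => [|x s IH] //.
have H : forall r, reduce (fil p (push x r)) = reduce (fil p (x :: r)).
  case=> [|y r] //=; case: ifP => Hc //.
  have E : x.1 = y.1 by move: Hc => /andP [/eqP].
  rewrite /fil /= E; case: (p y.1) => //.
  by rewrite reduce_cancel2.
rewrite (reduce_cons x s) H /fil /=; case: ifP => _.
  by rewrite !reduce_cons -/(fil p (reduce s)) -/(fil p s) IH.
exact: IH.
Qed.

Lemma rho_eqv p a a' : reduce a = reduce a' -> rho p a = rho p a'.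
Proof. by move=> H; rewrite /rho -reduce_fil H reduce_fil. Qed.

Lemma rho_cat p a b : rho p (a ++ b) = reduce (rho p a ++ rho p b).
Proof. by rewrite /rho fil_cat reduce_catl reduce_catr. Qed.

Lemma rho_winv p a : rho p (winv a) = reduce (winv (rho p a)).
Proof. by rewrite /rho fil_winv reduce_winv. Qed.

Lemma rho_kill p a X b : rho p X = [::] -> rho p (a ++ X ++ b) = rho p (a ++ b).
Proof.
move=> H; rewrite !rho_cat.
by rewrite -(reduce_catl (rho p X)) H /= -/(rho p b) reduceK.
Qed.

Lemma rho_pair p x y : cancels x y -> rho p [:: x; y] = [::].
Proof.
move=> H; have E : x.1 = y.1 by move: H => /andP [/eqP].
rewrite /rho /fil /= E; case: (p y.1) => //.
by rewrite [reduce _]/= H.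
Qed.

Lemma redd_cat a b x y : redd (rcons a x ++ y :: b) = [&& redd (rcons a x), ncan x y & redd (y :: b)].
Proof. by rewrite /redd cat_rcons sorted_cat_cons. Qed.

Lemma redd_catl a b : redd (a ++ b) -> redd a.
Proof. by move/cat_sorted2 => []. Qed.
Lemma redd_catr a b : redd (a ++ b) -> redd b.
Proof. by move/cat_sorted2 => []. Qed.

Fixpoint pw w n := if n is n'.+1 then w ++ pw w n' else [::].

Lemma pw_add w (a b : nat) : pw w (a + b) = pw w a ++ pw w b.
Proof. by elim: a => [|a IH] //=; rewrite IH catA. Qed.

Lemma pw_nil n : pw [::] n = [::].
Proof. by elim: n. Qed.

Lemma rho_pw p w n : rho p (pw w n) = reduce (pw (rho p w) n).
Proof.
elim: n => [|n IH] //=.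
by rewrite rho_cat IH reduce_catr.
Qed.

Lemma pw_redd x r n : redd (x :: r) -> ncan (last x r) x -> redd (pw (x :: r) n).
Proof.
move=> Hr Hl; elim: n => [|n IH] //=.
case: n IH => [|n] IH; first by rewrite cats0.
move: IH; rewrite [pw _ n.+1]/= /redd /= cat_path => IH.
rewrite cat_path; apply/andP; split; first exact: Hr.
by rewrite /= Hl /= cat_path.
Qed.

Lemma pw_conj x m n : reduce (pw (x :: rcons m (flip x)) n.+1) = reduce (x :: pw m n.+1 ++ [:: flip x]).
Proof.
elim: n => [|n IH]; first by rewrite /= !cats0 cats1.
have -> : pw (x :: rcons m (flip x)) n.+2 = (x :: rcons m (flip x)) ++ pw (x :: rcons m (flip x)) n.+1 by [].
rewrite -reduce_catr IH reduce_catr.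
have -> : (x :: rcons m (flip x)) ++ x :: pw m n.+1 ++ [:: flip x] = (x :: m) ++ flip x :: x :: (pw m n.+1 ++ [:: flip x]) by rewrite cat_cons cat_rcons.
rewrite reduce_cancel_mid; last by rewrite cancelsC cancels_flipx.
have -> : pw m n.+2 = m ++ pw m n.+1 by [].
by rewrite -catA.
Qed.

Lemma torsion_aux N r n : size r < N -> redd r -> 0 < n -> reduce (pw r n) = [::] -> r = [::].
Proof.
elim: N r => [|N IH] r //= Hs Hr Hn H.
case: r Hs Hr H => [|x r] // Hs Hr H.
case Hc: (cancels (last x r) x).
- case/lastP: r Hs Hr H Hc => [|m z] Hs Hr H Hc.
    by move: Hc; rewrite /= /cancels eqxx; case: (x.2).
  rewrite last_rcons cancelsC in Hc.
  have Ez := cancels_flip Hc; subst z.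
  have Hm : redd m.
    by move: Hr; rewrite -cats1 -cat_cons => /redd_catl /path_sorted.
  move: IH Hs; case: n Hn H => [|n] // _ H IH Hs.
  have Hpm : reduce (pw m n.+1) = [::].
    have E1 : reduce (pw m n.+1) = reduce ([:: flip x] ++ (x :: pw m n.+1 ++ [:: flip x]) ++ [:: x]).
      symmetry; rewrite cat1s cat_cons reduce_cancel2; last by rewrite cancelsC cancels_flipx.
      rewrite -catA cat1s (@reduce_cancel_mid _ [::]); last by rewrite cancelsC cancels_flipx.
      by rewrite cats0.
    rewrite E1 -reduce_catr -(reduce_catl (x :: _)) -(pw_conj x m n) H.
    have -> : reduce ([::] ++ [:: x]) = [:: x] by [].
    by rewrite cat1s reduce_cancel2 // cancelsC cancels_flipx.
  have Em : m = [::].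
    apply: (IH m _ Hm (ltn0Sn n) Hpm).
    move: Hs; rewrite /= size_rcons; lia.
  subst m; move: Hr; rewrite /redd /= /ncan.
  by rewrite cancels_flipx.
- have Hred := pw_redd n Hr (negbT Hc).
  move: H; rewrite reduce_id //.
  by move: IH Hred; case: n Hn.
Qed.

Lemma torsion p w n : 0 < n -> rho p (pw w n) = [::] -> rho p w = [::].
Proof.
move=> Hn; rewrite rho_pw => H.
exact: (@torsion_aux (size (rho p w)).+1 (rho p w) n (ltnSn _) (redd_reduce _) Hn H).
Qed.

Lemma rho_pw0 p w n : rho p w = [::] -> rho p (pw w n) = [::].
Proof. by move=> H; rewrite rho_pw H pw_nil. Qed.


Lemma cancel_decomp X Y : redd X -> redd Y ->
  exists X1 P Y1, [/\ X = X1 ++ P, Y = winv P ++ Y1 & reduce (X ++ Y) = X1 ++ Y1].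
Proof.
move=> HX HY; rewrite reduce_cat (reduce_id HY).
elim: X HX => [|x X IH] HX; first by exists [::], [::], Y.
have [X1 [P [Y1 [E1 E2 E3]]]] := IH (path_sorted HX).
have -> : foldr (@push T) Y (x :: X) = push x (foldr (@push T) Y X) by [].
rewrite E3.
case: X1 E1 E3 => [|x1 X1] E1 E3.
- case: Y1 E2 E3 => [|y Y1] E2 E3.
  + by exists [:: x], P, [::]; rewrite E1.
  + case Hc: (cancels x y).
    * exists [::], (x :: P), Y1; split => //; first by rewrite E1.
      - by rewrite winv_cons E2 -catA (cancels_flip Hc).
      - by rewrite /= Hc.
    * by exists [:: x], P, (y :: Y1); rewrite E1 /= Hc.
- exists (x :: x1 :: X1), P, Y1; split => //; first by rewrite E1.
  move: HX; rewrite E1 /= => /andP [Hn _].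
  by move: Hn; rewrite /ncan => /negbTE ->.
Qed.

Lemma root_aux N (A B : seq (letter T)) : size A + size B < N -> A ++ B = B ++ A ->
  exists w (a b : nat), A = pw w a /\ B = pw w b.
Proof.
elim: N A B => // N IH A B Hs E.
case: A Hs E => [|x A'] Hs E.
  by exists B, 0, 1; rewrite /= cats0.
case: B Hs E => [|y B'] Hs E.
  by exists (x :: A'), 1, 0; rewrite /= cats0.
set A := x :: A' in Hs E *; set B := y :: B' in Hs E *.
case: (leqP (size A) (size B)) => Hab.
- have EB : B = A ++ drop (size A) B.
    rewrite -{1}(cat_take_drop (size A) B); congr (_ ++ _).
    by rewrite -(takel_cat A Hab) -E take_size_cat.
  have E' : A ++ drop (size A) B = drop (size A) B ++ A.
    apply: (@catIl A); rewrite -EB E {1}EB -catA //.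
  have [w [a [b [Ha Hb]]]] := IH A (drop (size A) B) ltac:(rewrite size_drop /A /=; move: Hs; rewrite /A /B /=; lia) E'.
  by exists w, a, (a + b); rewrite pw_add -Ha -Hb.
- have EA : A = B ++ drop (size B) A.
    rewrite -{1}(cat_take_drop (size B) A); congr (_ ++ _).
    by rewrite -(takel_cat B (ltnW Hab)) E take_size_cat.
  have E' : drop (size B) A ++ B = B ++ drop (size B) A.
    apply: (@catIl B); rewrite catA -EA; exact: E.
  have [w [a [b [Ha Hb]]]] := IH (drop (size B) A) B ltac:(rewrite size_drop /B /=; move: Hs; rewrite /A /B /=; lia) E'.
  by exists w, (b + a), b; rewrite pw_add -Ha -Hb.
Qed.

Lemma root (A B : seq (letter T)) : A ++ B = B ++ A ->
  exists w (a b : nat), A = pw w a /\ B = pw w b.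
Proof. exact: (@root_aux (size A + size B).+1). Qed.


Lemma winv_rcons s z : winv (rcons s z) = flip z :: winv s.
Proof. by rewrite -cats1 winv_cat. Qed.

Lemma rho_winv0 p Y : rho p (winv Y) = [::] -> rho p Y = [::].
Proof. by move=> H; rewrite -(winvK Y) rho_winv H. Qed.

Lemma rho_winv0' p Y : rho p Y = [::] -> rho p (winv Y) = [::].
Proof. by move=> H; rewrite rho_winv H. Qed.

Lemma core p x X' Y : redd (x :: X') -> ncan (last x X') x -> redd Y -> Y != [::] ->
  reduce ((x :: X') ++ Y) = reduce (Y ++ (x :: X')) -> rho p (x :: X') = [::] -> rho p Y = [::].
Proof.
move=> HX Hcyc HY HYn Ecomm HrX.
have [X1 [P [Y1 [E1 E2 E3]]]] := cancel_decomp HX HY.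
have [Y2 [Q [X2 [F1 F2 F3]]]] := cancel_decomp HY HX.
have E : X1 ++ Y1 = Y2 ++ X2 by rewrite -E3 -F3.
have sX1 := congr1 size E1; have sY := congr1 size E2.
have sY2 := congr1 size F1; have sX2 := congr1 size F2; have sE := congr1 size E.
rewrite !size_cat ?size_winv in sX1 sY sY2 sX2 sE.
have HYs : 0 < size Y by case: (Y) HYn.
have PQ : size P = size Q by lia.
case P0: (size P == 0).
- move/eqP/size0nil: P0 => P0; subst P.
  have Q0 : Q = [::] by apply/size0nil; rewrite -PQ.
  subst Q.
  rewrite cats0 in E1; rewrite cats0 in F1; rewrite /= in E2; rewrite /= in F2.
  subst X1 Y1 Y2 X2.
  have [w [a [b [Ha Hb]]]] := root E.
  have Ha0 : 0 < a by case: a Ha => // /= Ha; rewrite Ha in HX *; case: X' Ha.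
  rewrite Ha in HrX; have Hw := torsion Ha0 HrX.
  by rewrite Hb; apply: rho_pw0.
case PY: (size P == size Y).
- move/eqP: PY => PY.
  have Y10 : Y1 = [::] by apply/size0nil; lia.
  have Y20 : Y2 = [::] by apply/size0nil; lia.
  subst Y1 Y2; rewrite cats0 in E2; rewrite cat0s in F1; rewrite cats0 cat0s in E; subst X2 Q.
  have EP : P = winv Y by rewrite E2 winvK.
  subst P.
  have Ec : X1 ++ winv Y = winv Y ++ X1 by rewrite -E1 -F2.
  have [w [a [b [Ha Hb]]]] := root Ec.
  have Hab : 0 < a + b.
    case: (a + b) (pw_add w a b) => // /=; rewrite -Ha -Hb -E1 => H.
    by move: (congr1 size H) => /=.
  rewrite E1 Ha Hb -pw_add in HrX.
  have Hw := torsion Hab HrX.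
  apply: rho_winv0; rewrite Hb; exact: rho_pw0.
case PX: (size P == size (x :: X')).
- move/eqP: PX => PX.
  have X10 : X1 = [::] by apply/size0nil; lia.
  have X20 : X2 = [::] by apply/size0nil; lia.
  subst X1 X2; rewrite cat0s in E1; rewrite cats0 in F2; rewrite cats0 cat0s in E; subst Y2.
  have EQ : Q = winv (x :: X') by rewrite F2 winvK.
  subst P Q.
  have Ec : winv (x :: X') ++ Y1 = Y1 ++ winv (x :: X') by rewrite -E2 -F1.
  have [w [a [b [Ha Hb]]]] := root Ec.
  have Ha0 : 0 < a.
    case: a Ha => // /= H; by move: (congr1 size H); rewrite size_winv.
  have Hw : rho p w = [::].
    apply: (torsion Ha0); rewrite -Ha; exact: rho_winv0'.
  rewrite E2 Ha Hb -pw_add; exact: rho_pw0.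
- exfalso; clear E3 F3 Ecomm sE.
  case: X1 E1 E sX1 => [|x1 X1] E1 E sX1; first by move: PX; rewrite sX1 /= eqxx.
  case: Y2 F1 E sY2 => [|y2 Y2] F1 E sY2; first by move/negbT: PY; rewrite sY2 PQ /= eqxx.
  case/lastP: P E1 E2 P0 {PX PY sX1 sY PQ sX2} => [|P' z] E1 E2 P0 //.
  case: E => Ex1 _; subst y2.
  case: E1 => Ex1' E1; subst x1.
  have Ez : last x X' = z by rewrite E1 last_cat last_rcons.
  have Hy : x = flip z.
    by move: E2 F1; rewrite winv_rcons => -> [-> _].
  by move: Hcyc; rewrite Ez /ncan Hy cancels_flipx.
Qed.


Definition cj x s := flip x :: s ++ [:: x].

Lemma cj_cat x s t : reduce (cj x s ++ cj x t) = reduce (cj x (s ++ t)).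
Proof.
have -> : cj x s ++ cj x t = (flip x :: s) ++ x :: flip x :: (t ++ [:: x]).
  by rewrite /cj cat_cons -catA.
rewrite reduce_cancel_mid; last exact: cancels_flipx.
by rewrite /cj cat_cons catA.
Qed.

Lemma cj_eqv x s t : reduce s = reduce t -> reduce (cj x s) = reduce (cj x t).
Proof.
move=> H; have E u : cj x u = [:: flip x] ++ (u ++ [:: x]) by [].
by rewrite !E; apply: eqv_cat => //; apply: eqv_cat.
Qed.

Lemma cj_X x m : reduce (cj x (x :: rcons m (flip x))) = reduce m.
Proof.
have -> : cj x (x :: rcons m (flip x)) = flip x :: x :: (m ++ [:: flip x; x]).
  by rewrite /cj cat_cons cat_rcons.
rewrite reduce_cancel2; last by rewrite cancelsC cancels_flipx.
rewrite (reduce_cancel_mid m [::]); last by rewrite cancelsC cancels_flipx.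
by rewrite cats0.
Qed.

Lemma cj_Y x Y : reduce Y = reduce (x :: reduce (cj x Y) ++ [:: flip x]).
Proof.
have E u : x :: u ++ [:: flip x] = [:: x] ++ (u ++ [:: flip x]) by [].
rewrite E -reduce_catr reduce_catl reduce_catr -E.
have -> : x :: cj x Y ++ [:: flip x] = x :: flip x :: (Y ++ [:: x; flip x]).
  by rewrite /cj cat_cons -catA.
rewrite reduce_cancel2; last exact: cancels_flipx.
by rewrite (reduce_cancel_mid Y [::]) ?cats0 //; exact: cancels_flipx.
Qed.
Lemma comm_kill_aux p N X Y : size X < N -> redd X -> redd Y -> X != [::] -> Y != [::] ->
  reduce (X ++ Y) = reduce (Y ++ X) -> rho p X = [::] -> rho p Y = [::].
Proof.
elim: N X Y => // N IH X Y Hs HX HY HXn HYn Ec HrX.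
case: X Hs HX HXn Ec HrX => [|x X'] // Hs HX _ Ec HrX.
case Hc: (cancels (last x X') x); last exact: core HX (negbT Hc) HY HYn Ec HrX.
case/lastP: X' Hs HX Ec HrX Hc => [|m z] Hs HX Ec HrX Hc.
  by move: Hc; rewrite /= /cancels eqxx; case: (x.2).
rewrite last_rcons cancelsC in Hc; have Ez := cancels_flip Hc; subst z.
have Hm : redd m.
  by move: HX; rewrite -cats1 -cat_cons => /redd_catl /path_sorted.
have Hmn : m != [::].
  case: m Hm HX {Hs Ec HrX} => // _.
  by rewrite /redd /= /ncan cancels_flipx.
set Y' := reduce (cj x Y).
have HY'n : Y' != [::].
  apply/negP => /eqP HY'; move: (cj_Y x Y); rewrite -/Y' HY' (reduce_id HY).
  rewrite cat0s reduce_cancel2; last exact: cancels_flipx.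
  by move=> HY0; rewrite HY0 in HYn.
have Ec' : reduce (m ++ Y') = reduce (Y' ++ m).
  have E1 : reduce (m ++ Y') = reduce (cj x (x :: rcons m (flip x)) ++ cj x Y).
    by apply: eqv_cat; [rewrite cj_X | rewrite reduceK].
  have E2 : reduce (Y' ++ m) = reduce (cj x Y ++ cj x (x :: rcons m (flip x))).
    by apply: eqv_cat; [rewrite reduceK | rewrite cj_X].
  by rewrite E1 E2 !cj_cat; apply: cj_eqv.
have Hrm : rho p m = [::].
  rewrite -(rho_eqv p (cj_X x m)).
  have -> : cj x (x :: rcons m (flip x)) = [:: flip x] ++ (x :: rcons m (flip x)) ++ [:: x] by [].
  rewrite rho_kill //.
  by apply: rho_pair; rewrite cancelsC cancels_flipx.
have HrY' : rho p Y' = [::].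
  apply: (IH m Y' _ Hm (redd_reduce _) Hmn HY'n Ec' Hrm).
  by move: Hs; rewrite /= size_rcons; lia.
rewrite (rho_eqv p (cj_Y x Y)) -/Y'.
have -> : x :: Y' ++ [:: flip x] = [:: x] ++ Y' ++ [:: flip x] by [].
rewrite rho_kill //.
by apply: rho_pair; exact: cancels_flipx.
Qed.
Lemma comm_kill p X Y : redd X -> redd Y -> X != [::] -> Y != [::] ->
  reduce (X ++ Y) = reduce (Y ++ X) -> rho p X = [::] -> rho p Y = [::].
Proof. exact: (@comm_kill_aux p (size X).+1). Qed.


Lemma restrictE (S : {set T}) h : restrict S h = rho (fun t => t \notin S) h.
Proof. by []. Qed.

Lemma fg_comm_eq a b : fg_comm a b = reduce (a ++ b ++ winv a ++ winv b).
Proof.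
rewrite /fg_comm /fg_add /fg_opp -/(winv a) -/(winv b).
rewrite reduce_catl reduce_catr -catA reduce_catl -catA.
apply: eqv_cat => //; apply: eqv_cat => //; apply: eqv_cat => //; exact: reduceK.
Qed.

Lemma reduce_cancel_gen a b c : reduce (a ++ winv b ++ b ++ c) = reduce (a ++ c).
Proof.
apply: eqv_cat => //.
by rewrite catA -reduce_catl reduce_winvl.
Qed.

Lemma rho_reduce p s : rho p (reduce s) = rho p s.
Proof. exact: reduce_fil. Qed.

Lemma rho_comm p a b : rho p (fg_comm a b) = fg_comm (rho p a) (rho p b).
Proof.
rewrite fg_comm_eq rho_reduce fg_comm_eq /rho !fil_cat !fil_winv.
apply: eqv_cat; first by rewrite reduceK.
apply: eqv_cat; first by rewrite reduceK.
apply: eqv_cat; first by apply: eqv_winv; rewrite reduceK.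
by apply: eqv_winv; rewrite reduceK.
Qed.

Lemma comm_zero X Y : reduce (X ++ Y ++ winv X ++ winv Y) = [::] ->
  reduce (X ++ Y) = reduce (Y ++ X).
Proof.
move=> H.
have E : reduce ((X ++ Y ++ winv X ++ winv Y) ++ Y ++ X) = reduce (X ++ Y).
  rewrite -!catA.
  have -> : X ++ Y ++ winv X ++ winv Y ++ Y ++ X = (X ++ Y ++ winv X) ++ winv Y ++ Y ++ X.
    by rewrite -!catA.
  rewrite reduce_cancel_gen -!catA.
  have -> : X ++ Y ++ winv X ++ X = (X ++ Y) ++ winv X ++ X ++ [::] by rewrite cats0 -!catA.
  by rewrite reduce_cancel_gen cats0.
by rewrite -E -reduce_catl H.
Qed.

Lemma mem_reduce s : {subset reduce s <= s}.
Proof.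
elim: s => [|x s IH] //= l.
have H : forall r, l \in push x r -> l \in x :: r.
  case=> [|y r] //=; case: ifP => // _ Hl.
  by rewrite !inE Hl !orbT.
move/H; rewrite !inE => /orP [-> //|/IH ->]; by rewrite orbT.
Qed.

Lemma all_reduce (P : pred (letter T)) s : all P s -> all P (reduce s).
Proof. by move=> /allP H; apply/allP => l /mem_reduce /H. Qed.

Lemma all_winv (q : pred T) s : all (fun l => q l.1) s -> all (fun l => q l.1) (winv s).
Proof. by rewrite /winv all_rev all_map. Qed.

Lemma rho_rho p q r w : (forall t, r t = p t && q t) -> rho p (rho q w) = rho r w.
Proof.
move=> H; rewrite /rho reduce_fil /fil -filter_predI.
by congr reduce; apply: eq_filter => l /=; rewrite H.
Qed.


Definition Zw (S : {set T}) w := restrict S w == [::].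
Definition Sep (A B : seq (seq (letter T))) := forall S : {set T},
  all (fun w => ~~ Zw S w) (A ++ B) ->
  exists S2 : {set T}, S \subset S2 /\ has (Zw S2) A != has (Zw S2) B.
Fixpoint allsep (t : ctree T) : Prop :=
  match t with
  | Leaf _ => True
  | Node a b => [/\ Sep (cleaves a) (cleaves b), allsep a & allsep b]
  end.

Lemma tree_zero t : allsep t -> forall S, Zw S (cvalue t) = has (Zw S) (cleaves t).
Proof.
elim: t => [w|a IHa b IHb] /=; first by move=> _ S; rewrite orbF.
move=> [Hsep Ha Hb] S.
rewrite has_cat -(IHa Ha S) -(IHb Hb S) /Zw !restrictE rho_comm.
set p := (fun t => t \notin S).
case HX: (rho p (cvalue a) == [::]).
  by move/eqP: HX => ->; rewrite fg_comm_eq /= reduce_winvr.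
case HY: (rho p (cvalue b) == [::]).
  by move/eqP: HY => ->; rewrite fg_comm_eq /= cats0 reduce_winvr eqxx.
apply/negbTE/eqP => Hc.
set X := rho p (cvalue a) in HX Hc; set Y := rho p (cvalue b) in HY Hc.
have Ec : reduce (X ++ Y) = reduce (Y ++ X) by apply: comm_zero; rewrite -fg_comm_eq.
have Hall : all (fun w => ~~ Zw S w) (cleaves a ++ cleaves b).
  have E1 : has (Zw S) (cleaves a) = false by rewrite -(IHa Ha S) /Zw restrictE HX.
  have E2 : has (Zw S) (cleaves b) = false by rewrite -(IHb Hb S) /Zw restrictE HY.
  rewrite all_cat; apply/andP; split; apply/allP => w Hw; apply/negP => Hz.
    suff: has (Zw S) (cleaves a) by rewrite E1.
    by apply/hasP; exists w.
  suff: has (Zw S) (cleaves b) by rewrite E2.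
  by apply/hasP; exists w.
have [S2 [HS2 Hne]] := Hsep S Hall.
rewrite -(IHa Ha S2) -(IHb Hb S2) /Zw !restrictE in Hne.
set p2 := (fun t => t \notin S2) in Hne.
have Er v : rho p2 v = rho p2 (rho p v).
  symmetry; apply: rho_rho => t; rewrite /p2 /p.
  case Ht: (t \in S2); first by [].
  rewrite /=; symmetry; apply/negP => HtS.
  by move: (subsetP HS2 t HtS); rewrite Ht.
rewrite (Er (cvalue a)) (Er (cvalue b)) -/X -/Y in Hne.
have HXn : X != [::] by rewrite HX.
have HYn : Y != [::] by rewrite HY.
case HX2: (rho p2 X == [::]) in Hne.
  move/eqP: HX2 => HX2.
  have := comm_kill (redd_reduce _) (redd_reduce _) HXn HYn Ec HX2.
  by move=> HY2; move: Hne; rewrite HY2 eqxx.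
case HY2: (rho p2 Y == [::]) in Hne => //.
move/eqP: HY2 => HY2.
have := comm_kill (redd_reduce _) (redd_reduce _) HYn HXn (esym Ec) HY2.
by move=> HX2'; move: HX2; rewrite HX2' eqxx.
Qed.

End FG.

Lemma arith1 sL sR k j js : j < js -> js <= k -> j <= sL -> ~~ ((j <= sL) && (k - j <= sR)) ->
  ((j <= maxn sL js) && (k - j <= maxn sR (k - js))) = false.
Proof. move=> H1 H2 H3; rewrite H3 /= => H4; apply/negbTE; rewrite negb_and; apply/orP; right; lia. Qed.
Lemma arith2 sL sR k j js : js < j -> sL < j ->
  ((j <= maxn sL js) && (k - j <= maxn sR (k - js))) = false.
Proof. move=> H1 H2; apply/negbTE; rewrite negb_and; apply/orP; left; lia. Qed.

Lemma boundary (s : nat) (J : seq nat) : J != [::] ->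
  exists j, j \in J /\ forall j', j' \in J -> (j < j' -> s < j') /\ (j' < j -> j' <= s).
Proof.
elim: J => [|x J IH] // _.
case: J IH => [|y J] IH.
  exists x; split; first exact: mem_head.
  by move=> j'; rewrite inE => /eqP ->; rewrite ltnn.
have [j0 [Hj0 P0]] := IH isT.
have Hx: forall j, j \in [:: x, y & J] -> j = x \/ j \in y :: J.
  by move=> j; rewrite inE => /orP [/eqP ->|]; [left|right].
case: (leqP x s) => Hxs; case: (leqP j0 s) => Hj0s.
- exists (maxn x j0); split.
    by case: (leqP x j0) => _; [rewrite inE Hj0 orbT|rewrite mem_head].
  move=> j' /Hx [->|Hj']; first lia.
  have := P0 j' Hj'; lia.
- exists j0; split; first by rewrite inE Hj0 orbT.
  move=> j' /Hx [->|Hj']; first lia.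
  exact: P0.
- exists j0; split; first by rewrite inE Hj0 orbT.
  move=> j' /Hx [->|Hj']; first lia.
  exact: P0.
- exists (minn x j0); split.
    by case: (leqP x j0) => _; [rewrite mem_head|rewrite inE Hj0 orbT].
  move=> j' /Hx [->|Hj']; first lia.
  have := P0 j' Hj'; lia.
Qed.

Section Sets.
Variable T : finType.
Implicit Types S X Y : {set T}.

Lemma ext_set S X m : #|S :&: X| <= m <= #|X| ->
  exists S1, [/\ S \subset S1, S1 \subset S :|: X & #|S1 :&: X| = m].
Proof.
move=> /andP [H1 H2].
have [d Ed] : exists d, m = d + #|S :&: X| by exists (m - #|S :&: X|); lia.
subst m; elim: d S H1 H2 => [|d IH] S H1 H2.
  by exists S; split => //; apply: subsetUl.
have /subsetPn [x HxX HxS] : ~~ (X \subset S).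
  apply/negP => HXS; move: H2; rewrite (setIidPr HXS); lia.
have Hc : #|(x |: S) :&: X| = (#|S :&: X|).+1.
  rewrite setIUl (setIidPl _); last by rewrite sub1set.
  by rewrite cardsU1 inE negb_and HxS.
have [S1 [Ha Hb Hcc]] := IH (x |: S) ltac:(lia) ltac:(lia).
exists S1; split.
- by apply: subset_trans Ha; apply: subsetUr.
- apply: (subset_trans Hb); apply/subsetP => y; rewrite !inE.
  by case/orP => [/orP [/eqP ->|->]|->]; rewrite ?HxX ?orbT.
- by rewrite Hcc Hc; lia.
Qed.

Lemma setI_keep S S1 X Y : S \subset S1 -> S1 \subset S :|: X -> [disjoint X & Y] ->
  S1 :&: Y = S :&: Y.
Proof.
move=> H1 H2 Hd; apply/setP => y; rewrite !inE.
case Hy: (y \in Y); rewrite ?andbF ?andbT //.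
apply/idP/idP => [Hy1|]; last exact: (subsetP H1).
move: (subsetP H2 y Hy1); rewrite inE => /orP [//|HyX].
by move: (disjointFr Hd HyX); rewrite Hy.
Qed.

End Sets.

Definition Inv (T : finType) (V : {set T}) (k : nat) (w : seq (letter T)) :=
  all (fun l => l.1 \in V) w /\ forall S : {set T}, Zw S w = (k <= #|S :&: V|).

Lemma supp_cvalue (T : finType) (q : pred T) (t : ctree T) :
  all (fun w => all (fun l => q l.1) w) (cleaves t) -> all (fun l => q l.1) (cvalue t).
Proof.
elim: t => [w|a IHa b IHb] /=; first by rewrite andbT.
rewrite all_cat => /andP [Ha Hb].
have Ha' := IHa Ha; have Hb' := IHb Hb.
rewrite fg_comm_eq; apply: all_reduce.
by rewrite !all_cat Ha' Hb' !all_winv.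
Qed.

Lemma cleaves_nil (T : finType) (t : ctree T) : cleaves t != [::].
Proof. by elim: t => [w|a IHa b IHb] //=; case: (cleaves a) IHa. Qed.

Section Split.
Variable T : finType.
Variables (V L R : {set T}) (k : nat) (hL hR : nat -> seq (letter T)).
Hypothesis Hdis : [disjoint L & R].
Hypothesis HLR : L :|: R = V.
Hypothesis Hk : 0 < k.
Let lo := k - #|R|.
Let hi := minn k #|L|.
Let f := Dj k hL hR.
Let Jall := iota lo (hi.+1 - lo).
Hypothesis IHL : forall j, lo <= j <= hi -> 0 < j -> Inv L j (hL j).
Hypothesis IHR : forall j, lo <= j <= hi -> j < k -> Inv R (k - j) (hR (k - j)).

Definition zeroD (S : {set T}) j := (j <= #|S :&: L|) && (k - j <= #|S :&: R|).

Lemma memJ j : (j \in Jall) = (lo <= j <= hi).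
Proof. rewrite mem_iota; apply/idP/idP; lia. Qed.

Lemma cardL S : #|S :&: L| <= #|L|.
Proof. by apply: subset_leq_card; apply: subsetIr. Qed.
Lemma cardR S : #|S :&: R| <= #|R|.
Proof. by apply: subset_leq_card; apply: subsetIr. Qed.

Lemma card_split S : #|S :&: V| = #|S :&: L| + #|S :&: R|.
Proof.
rewrite -HLR setIUr cardsU setIACA setIid (disjoint_setI0 Hdis) setI0 cards0.
by rewrite subn0.
Qed.

Lemma Dj_inv j : lo <= j <= hi ->
  all (fun l => l.1 \in V) (f j) /\ forall S, Zw S (f j) = zeroD S j.
Proof.
move=> Hj.
have subL : forall w : seq (letter T), all (fun l => l.1 \in L) w -> all (fun l => l.1 \in V) w.
  move=> w Hw; apply/allP => l Hl; move/allP: Hw => Hw.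
  by have := Hw l Hl; rewrite /= -HLR inE => ->.
have subR : forall w : seq (letter T), all (fun l => l.1 \in R) w -> all (fun l => l.1 \in V) w.
  move=> w Hw; apply/allP => l Hl; move/allP: Hw => Hw.
  by have := Hw l Hl; rewrite /= -HLR inE => ->; rewrite orbT.
rewrite /f /Dj; case: eqP => [Ej0|Hj0].
  subst j; have [Hs Hz] := IHR Hj Hk; rewrite subn0 in Hs Hz.
  split; first exact: subR.
  by move=> S; rewrite Hz /zeroD subn0.
case: eqP => [Ejk|Hjk].
  subst j; have [Hs Hz] := IHL Hj Hk.
  split; first exact: subL.
  by move=> S; rewrite Hz /zeroD subnn andbT.
have Hj1 : 0 < j by lia.
have Hj2 : j < k by move: Hj; rewrite /hi; lia.
have [HsL HzL] := IHL Hj Hj1; have [HsR HzR] := IHR Hj Hj2.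
split.
  by rewrite /fg_add; apply: all_reduce; rewrite all_cat subL // subR.
move=> S; rewrite /zeroD -HzL -HzR /Zw !restrictE /fg_add rho_reduce rho_cat.
set A := rho _ (hL j); set B := rho _ (hR (k - j)).
have HA : all (fun l => l.1 \in L) A by apply: all_reduce; rewrite /fil all_filter; apply/allP => l Hl; apply/implyP => _; move/allP: HsL => /(_ l Hl).
have HB : all (fun l => l.1 \in R) B by apply: all_reduce; rewrite /fil all_filter; apply/allP => l Hl; apply/implyP => _; move/allP: HsR => /(_ l Hl).
have Hred : redd (A ++ B).
  have HrA : redd A := redd_reduce _.
  have HrB : redd B := redd_reduce _.
  case/lastP: A HA HrA => [|A' u] HA HrA //.
  case: B HB HrB => [|v B'] HB HrB; first by rewrite cats0.
  rewrite redd_cat HrA HrB andbT /=.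
  move: HA HB; rewrite all_rcons /= => /andP [HuL _] /andP [HvR _].
  rewrite /ncan /cancels; apply/negP => /andP [/eqP Euv _].
  by move: (disjointFr Hdis HuL); rewrite Euv HvR.
rewrite reduce_id //.
by case: A {HA Hred}; case: B {HB}.
Qed.


Lemma mkS (S : {set T}) a b : #|S :&: L| <= a <= #|L| -> #|S :&: R| <= b <= #|R| ->
  exists S2 : {set T}, [/\ S \subset S2, #|S2 :&: L| = a & #|S2 :&: R| = b].
Proof.
move=> Ha Hb.
have [S1 [H1 H2 H3]] := ext_set Ha.
have E1 : S1 :&: R = S :&: R := setI_keep H1 H2 Hdis.
rewrite -E1 in Hb.
have [S2 [H4 H5 H6]] := ext_set Hb.
have E2 : S2 :&: L = S1 :&: L.
  by apply: (setI_keep H4 H5); rewrite disjoint_sym.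
exists S2; split => //; first exact: subset_trans H1 H4.
by rewrite E2.
Qed.

Lemma f_inj : {in Jall &, injective f}.
Proof.
move=> j j'; rewrite !memJ => Hj Hj' Ef.
have [S2 [_ HL HR]] := @mkS set0 j (k - j) ltac:(rewrite set0I cards0 /=; move: Hj; rewrite /hi; lia) ltac:(rewrite set0I cards0 /=; move: Hj; rewrite /lo; lia).
have Hz : zeroD S2 j by rewrite /zeroD HL HR !leqnn.
have [_ Hz1] := Dj_inv Hj; have [_ Hz2] := Dj_inv Hj'.
move: Hz; rewrite -Hz1 Ef Hz2 /zeroD HL HR.
move: Hj Hj'; rewrite /hi; lia.
Qed.

Lemma node_sep (A B : seq (seq (letter T))) : A ++ B != [::] ->
  {subset A ++ B <= map f Jall} -> uniq (A ++ B) -> Sep A B.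
Proof.
move=> Hne Hsub Hu S Hall.
set J := [seq j <- Jall | f j \in A ++ B].
have HJ : J != [::].
  case E: (A ++ B) Hne => [|w r] // _.
  have : w \in map f Jall by apply: Hsub; rewrite E mem_head.
  case/mapP => j Hj Ew.
  have : j \in J by rewrite mem_filter -Ew E mem_head Hj.
  by case: (J).
have [js [Hjs Pjs]] := boundary #|S :&: L| HJ.
move: (Hjs); rewrite mem_filter => /andP [Hfjs HjsJ].
move: (HjsJ); rewrite memJ => Hjsf.
have [S2 [HS2 HL2 HR2]] := @mkS S (maxn #|S :&: L| js) (maxn #|S :&: R| (k - js))
  ltac:(have := cardL S; move: Hjsf; rewrite /hi; lia)
  ltac:(have := cardR S; move: Hjsf; rewrite /lo; lia).
exists S2; split => //.
have Hw : forall w, w \in A ++ B -> Zw S2 w = (w == f js).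
  move=> w Hwin.
  have := Hsub w Hwin; case/mapP => j Hj Ew; subst w.
  have HjJ : j \in J by rewrite mem_filter Hwin Hj.
  have [_ Hz] := Dj_inv (etrans (esym (memJ j)) Hj).
  rewrite Hz.
  have Hnz : ~~ zeroD S j by rewrite -Hz; move/allP: Hall => /(_ _ Hwin).
  have [Pa Pb] := Pjs j HjJ.
  case: (eqVneq j js) => [->|Hne']; first by rewrite eqxx /zeroD HL2 HR2 !leq_maxr.
  have -> : (f j == f js) = false.
    by apply/negbTE/negP => /eqP Efe; move: Hne'; rewrite (f_inj Hj HjsJ Efe) eqxx.
  move: Hnz; rewrite /zeroD HL2 HR2.
  have Hjsk : js <= k by move: Hjsf => /andP [_]; rewrite /hi leq_min => /andP [].
  case: (ltngtP j js) Pa Pb Hne' => // Hlt Pa Pb _.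
    by apply: arith1 => //; apply: Pb.
  by move=> _; apply: arith2 => //; apply: Pa.
have HA : has (Zw S2) A = (f js \in A).
  rewrite -has_pred1; apply: eq_in_has => w Hwin.
  by rewrite Hw // mem_cat Hwin.
have HB : has (Zw S2) B = (f js \in B).
  rewrite -has_pred1; apply: eq_in_has => w Hwin.
  by rewrite Hw // mem_cat Hwin orbT.
rewrite HA HB.
move: Hu; rewrite cat_uniq => /and3P [_ Hdisj _].
move: Hfjs; rewrite mem_cat.
case HinA: (f js \in A); case HinB: (f js \in B) => //= _.
by move: Hdisj; rewrite (introT hasP) //; exists (f js).
Qed.


Lemma allsep_sub (t' : ctree T) : {subset cleaves t' <= map f Jall} -> uniq (cleaves t') -> allsep t'.
Proof.
elim: t' => [w|a IHa b IHb] //= Hsub Hu.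
move: (Hu); rewrite cat_uniq => /and3P [Hua _ Hub].
split.
- apply: node_sep => //.
  by move: (cleaves_nil a); case: (cleaves a).
- by apply: IHa => // w Hw; apply: Hsub; rewrite mem_cat Hw.
- by apply: IHb => // w Hw; apply: Hsub; rewrite mem_cat Hw orbT.
Qed.

Lemma split_inv (t : ctree T) : perm_eq (cleaves t) (map f Jall) -> Inv V k (cvalue t).
Proof.
move=> Hp.
have Hsub : {subset cleaves t <= map f Jall} by move=> w; rewrite (perm_mem Hp).
have Hu : uniq (cleaves t).
  by rewrite (perm_uniq Hp) (map_inj_in_uniq f_inj) iota_uniq.
split.
  apply: supp_cvalue; apply/allP => w /Hsub /mapP [j Hj ->].
  by have [Hs _] := Dj_inv (etrans (esym (memJ j)) Hj).
move=> S; rewrite (tree_zero (allsep_sub Hsub Hu)) (perm_has _ Hp) has_map card_split.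
transitivity (has (zeroD S) Jall).
  apply: eq_in_has => j Hj; rewrite /preim /=.
  by have [_ Hz] := Dj_inv (etrans (esym (memJ j)) Hj); exact: Hz.
have cL := cardL S; have cR := cardR S.
apply/hasP/idP.
- by case=> j; rewrite memJ /zeroD => Hj /andP [H1 H2]; lia.
- move=> H; exists (minn #|S :&: L| k).
    by rewrite memJ /lo /hi; lia.
  by rewrite /zeroD; apply/andP; split; lia.
Qed.

End Split.

Lemma Hword_inv (T : finType) (V : {set T}) k w : Hword V k w -> Inv V k w.
Proof.
elim => [x | V0 L R k0 hL hR t H2 Hk Hdis HLR HL1 HR1 HL IHL HR IHR Hperm].
- split; first by rewrite /= inE eqxx.
  move=> S; rewrite /Zw /restrict /=.
  case Hx: (x \in S) => /=.
    have -> : S :&: [set x] = [set x].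
      by apply/setP => y; rewrite !inE; case: (eqVneq y x) => [->|Hne]; rewrite ?Hx ?andbF ?andbT.
    by rewrite cards1.
  have -> : S :&: [set x] = set0.
    by apply/setP => y; rewrite !inE; case: (eqVneq y x) => [->|Hne]; rewrite ?Hx ?andbF ?andbT.
  by rewrite cards0.
- have Hk0 : 0 < k0 by case/andP: Hk.
  exact: (@split_inv T V0 L R k0 hL hR Hdis HLR Hk0 IHL IHR t Hperm).
Qed.

Theorem theorem2 (T : finType) (V : {set T}) (k : nat) (w : seq (letter T)) :
  V != set0 -> 1 <= k <= #|V| -> Hword V k w ->
  forall S : {set T}, S \subset V -> (restrict S w = [::] <-> k <= #|S|).
Proof.
move=> _ _ Hw S HS.
have [_ Hz] := Hword_inv Hw.
have := Hz S; rewrite /Zw (setIidPl HS) => E.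
split => [H|H]; first by rewrite -E H.
by apply/eqP; rewrite E.
Qed.
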